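(* Let $p$ be a prime with $p \equiv 5 \pmod 8$ and $p = s^2 + 4$ for some odd integer $s$. Let $g$ be a generator of $\mathbb{F}_p^*$, $C_0^{(4)}$ the subgroup of index $4$ of $\mathbb{F}_p^*$, $C_i^{(4)} = g^i C_0^{(4)}$, and $D = C_0^{(4)} \cup C_1^{(4)}$. Let $S_D$ be the set of $a \in \mathbb{F}_p^*$ such that the equation $x - y = a$ has exactly $(p-5)/4$ solutions $(x,y)\in D\times D$. Then $S_D = C_0^{(2)}$ or $S_D = C_1^{(2)}$, where $C_0^{(2)}$ is the subgroup of index $2$ of $\mathbb{F}_p^*$ (the nonzero squares) and $C_1^{(2)} = g C_0^{(2)}$.
   Context: Under the stated hypotheses it is known that $D$ is a $(p,(p-1)/2,(p-5)/4)$-almost difference set of $\mathbb{F}_p^+$, i.e. exactly $(p-1)/2$ nonzero $a$ give $(p-5)/4$ solutions of $x-y=a$ in $D\times D$ and all other nonzero $a$ give $(p-1)/4$ solutions. *)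

(* Defs.v *)
From mathcomp Require Import all_boot all_algebra.
Set Implicit Arguments. Unset Strict Implicit. Unset Printing Implicit Defensive.
Import GRing.Theory.
Local Open Scope ring_scope.

Definition is_generator (F : finFieldType) (g : F) : Prop :=
  g != 0 /\ forall x : F, x != 0 -> exists k : nat, x = g ^+ k.

Definition cyc_class (F : finFieldType) (g : F) (e i : nat) : {set F} :=
  [set x : F | [exists k : 'I_#|F|, x == g ^+ (e * k + i)%N]].

Definition diff_count (F : finFieldType) (D : {set F}) (a : F) : nat :=
  #|[set xy : F * F | [&& xy.1 \in D, xy.2 \in D & xy.1 - xy.2 == a]]|.

(* Main.v *)
Require Import Defs.
From mathcomp Require Import all_boot all_algebra algC finfield zify ring lra.
Import GRing.Theory Num.Theory.
Local Open Scope ring_scope.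
Set Implicit Arguments. Unset Strict Implicit.

Lemma sum_except (F : finFieldType) (K : comNzRingType) (f : F -> K) :
  \sum_y (if (y != 0) && (y + 1 != 0) then f y else 0) = \sum_y f y - f 0 - f (-1).
Proof.
have hn : (-1 : F) != 0 by rewrite oppr_eq0 oner_eq0.
rewrite [in RHS](bigD1 0) //= [in RHS](bigD1 (-1)) /=; last by rewrite hn.
rewrite -big_mkcond /=.
rewrite (eq_bigl (fun y => (y != 0) && (y != -1))); last first.
  by move=> y; rewrite addr_eq0.
set S := \sum_(i | _) f i.
ring.
Qed.

Lemma jacobi (F : finFieldType) (K : fieldType) (psi : F -> K)
  (hm : forall x y, psi (x * y) = psi x * psi y) (h0 : psi 0 = 0) (h1 : psi 1 = 1)
  (hs1 : \sum_x psi x = 0) (hs2 : \sum_x psi x ^+ 2 = 0) :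
  (\sum_x psi x * psi (x + 1)) * (\sum_y psi y^-1 * psi (y + 1)^-1) = #|F|%:R.
Proof.
set M := fun t y : F => (t * y + 1) / (y + 1).
have step1 : forall y, (psi y^-1 * psi (y + 1)^-1) * (\sum_x psi x * psi (x + 1)) =
    if (y != 0) && (y + 1 != 0) then \sum_t psi t * psi (M t y) else 0.
  move=> y; case: (eqVneq y 0) => [->|hy] /=; first by rewrite invr0 h0 !mul0r.
  case: (eqVneq (y + 1) 0) => [->|hy1] /=; first by rewrite invr0 h0 mulr0 mul0r.
  rewrite mulr_sumr (reindex_inj (mulIf hy)); apply: eq_bigr => t _.
  have e1 : psi (t * y) * psi y^-1 = psi t by rewrite -hm mulfK.
  have e2 : psi (t * y + 1) * psi (y + 1)^-1 = psi (M t y) by rewrite -hm.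
  rewrite -e1 -e2; ring.
rewrite mulrC mulr_suml (eq_bigr _ (fun y _ => step1 y)).
have step2 : forall y, (if (y != 0) && (y + 1 != 0) then \sum_t psi t * psi (M t y) else 0)
    = \sum_t psi t * (if (y != 0) && (y + 1 != 0) then psi (M t y) else 0).
  by move=> y; case: ifP => _ //; rewrite big1 // => t _; rewrite mulr0.
rewrite (eq_bigr _ (fun y _ => step2 y)) exchange_big /=.
under eq_bigr => t _ do rewrite -mulr_sumr sum_except.
have hn : (-1 : F) != 0 by rewrite oppr_eq0 oner_eq0.
have M0 : forall t, M t 0 = 1 by move=> t; rewrite /M mulr0 add0r divr1.
have Mm1 : forall t, M t (-1) = 0 by move=> t; rewrite /M addNr invr0 mulr0.
have yP : forall y : F, (y + 1 != 0) = (y != -1) by move=> y; rewrite addr_eq0.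
have inner : forall t, \sum_y psi (M t y) - psi (M t 0) - psi (M t (-1)) =
    if t == 1 then #|F|%:R - 2%:R else - psi t - 1.
  move=> t; rewrite M0 Mm1 h0 h1 subr0.
  case: (eqVneq t 1) => [->|ht].
    rewrite (bigD1 (-1)) //= Mm1 h0 add0r.
    rewrite (eq_bigr (fun _ => 1)); last first.
      by move=> y hy; rewrite /M mul1r divff ?h1 // yP.
    rewrite sumr_const cardC1.
    have hc : (0 < #|F|)%N by apply/card_gt0P; exists 0.
    by rewrite -{2}(prednK hc) -addn1 natrD; ring.
  set Mb := fun y => if y == -1 then t else M t y.
  have noT : forall y, y != -1 -> M t y != t.
    move=> y hy; apply/negP => /eqP e.
    have e2 : t * y + 1 = t * (y + 1).
      by rewrite -[X in _ = X * _]e /M divfK // yP.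
    move: e2; rewrite mulrDr mulr1 => /addrI e3.
    by move: ht; rewrite e3 eqxx.
  have Mbinj : injective Mb.
    move=> y1 y2; rewrite /Mb.
    case: (eqVneq y1 (-1)) => [->|h1']; case: (eqVneq y2 (-1)) => [->|h2'] //.
    - by move=> e; move: (noT _ h2'); rewrite -e eqxx.
    - by move=> e; move: (noT _ h1'); rewrite e eqxx.
    move=> /eqP; rewrite /M eqr_div ?yP // => /eqP e.
    have : (t - 1) * (y1 - y2) = 0.
      transitivity ((t * y1 + 1) * (y2 + 1) - (t * y2 + 1) * (y1 + 1)); first ring.
      by rewrite e subrr.
    move/eqP; rewrite mulf_eq0 subr_eq0 (negbTE ht) /= subr_eq0 => /eqP //.
  have eS : \sum_y psi (M t y) = \sum_y psi (Mb y) - psi t.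
    rewrite [in RHS](bigD1 (-1)) //= [in LHS](bigD1 (-1)) //= /Mb eqxx Mm1 h0.
    rewrite add0r [psi t + _]addrC addrK; apply: eq_bigr => y /negbTE -> //.
  have eM : \sum_y psi (Mb y) = \sum_y psi y.
    by rewrite [in RHS](reindex_inj Mbinj).
  rewrite eS eM hs1; ring.
under eq_bigr => t _ do rewrite inner.
rewrite (bigD1 1) //= eqxx h1 mul1r.
rewrite (eq_bigr (fun t => - (psi t ^+ 2) - psi t)); last first.
  by move=> t /negbTE ->; rewrite expr2; ring.
have hs1' : \sum_(t | t != 1) psi t = -1.
  by have := hs1; rewrite (bigD1 1) //= h1 => e; apply: (addrI 1); rewrite e subrr.
have hs2' : \sum_(t | t != 1) psi t ^+ 2 = -1.
  by have := hs2; rewrite (bigD1 1) //= h1 expr1n => e; apply: (addrI 1); rewrite e subrr.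
rewrite sumrB sumrN hs1' hs2'.
ring.
Qed.

Lemma dvd_case (P : nat) (m Z : int) : (0 < P)%N -> odd P ->
  (m * P%:Z) ^+ 2 + 4 * Z ^+ 2 = P%:Z ^+ 2 -> Z = 0.
Proof.
move=> hP hodd e.
have [w hw] : exists w : int, P%:Z = 2 * w + 1.
  exists (P./2)%:Z; rewrite -[P in LHS](odd_double_half P) hodd /=; lia.
rewrite hw in e.
have hw0 : 0 <= w by lia.
have hm : m ^+ 2 <= 1.
  nia.
have [hm0|hm1] : m ^+ 2 = 0 \/ m ^+ 2 = 1 by nia.
  exfalso; nia.
nia.
Qed.

Lemma two_sq (P : nat) (a b s : int) : prime P -> odd P ->
  a ^+ 2 + 4 * b ^+ 2 = P%:Z -> s ^+ 2 + 4 = P%:Z -> b ^+ 2 = 1.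
Proof.
move=> hP hodd e1 e2.
have hP0 : (0 < P)%N by apply: prime_gt0.
set X := a * s + 4 * b. set Y := a * s - 4 * b.
have hXY : (P%:Z %| X * Y)%Z.
  apply/dvdzP; exists (P%:Z - 4 - 4 * b ^+ 2).
  have ha2 : a ^+ 2 = P%:Z - 4 * b ^+ 2 by rewrite -e1; ring.
  have hs2 : s ^+ 2 = P%:Z - 4 by rewrite -e2; ring.
  transitivity (a ^+ 2 * s ^+ 2 - 16 * b ^+ 2); first by rewrite /X /Y; ring.
  rewrite ha2 hs2; ring.
have : (P%:Z %| X)%Z || (P%:Z %| Y)%Z.
  by move: hXY; rewrite !dvdzE abszM Euclid_dvdM.
case/orP => /dvdzP [m hm].
- have eX : (m * P%:Z) ^+ 2 + 4 * (a - b * s) ^+ 2 = P%:Z ^+ 2.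
    rewrite -hm /X; transitivity ((a ^+ 2 + 4 * b ^+ 2) * (s ^+ 2 + 4)); first ring.
    by rewrite e1 e2 expr2.
  have := dvd_case hP0 hodd eX => /eqP; rewrite subr_eq0 => /eqP ha.
  rewrite ha -e2 in e1.
  have e3 : (b ^+ 2 - 1) * (s ^+ 2 + 4) = 0.
    transitivity ((b * s) ^+ 2 + 4 * b ^+ 2 - (s ^+ 2 + 4)); first ring.
    by rewrite ?sqrrN e1 subrr.
  move/eqP: e3; rewrite mulf_eq0 => /orP [/eqP h|/eqP h]; first by apply/eqP; rewrite -subr_eq0 h.
  exfalso; have := sqr_ge0 s; move: h; lia.
- have eY : (m * P%:Z) ^+ 2 + 4 * (a + b * s) ^+ 2 = P%:Z ^+ 2.
    rewrite -hm /Y; transitivity ((a ^+ 2 + 4 * b ^+ 2) * (s ^+ 2 + 4)); first ring.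
    by rewrite e1 e2 expr2.
  have := dvd_case hP0 hodd eY => /eqP; rewrite addr_eq0 => /eqP ha.
  rewrite ha -e2 in e1.
  rewrite sqrrN in e1.
  have e3 : (b ^+ 2 - 1) * (s ^+ 2 + 4) = 0.
    transitivity ((b * s) ^+ 2 + 4 * b ^+ 2 - (s ^+ 2 + 4)); first ring.
    by rewrite ?sqrrN e1 subrr.
  move/eqP: e3; rewrite mulf_eq0 => /orP [/eqP h|/eqP h]; first by apply/eqP; rewrite -subr_eq0 h.
  exfalso; have := sqr_ge0 s; move: h; lia.
Qed.

Section Main.
Variable p : nat.
Hypothesis hp : prime p.
Hypothesis hp8 : p = 5 %[mod 8].
Variable g : 'F_p.
Hypothesis hg0 : g != 0.
Hypothesis hgen : forall x : 'F_p, x != 0 -> exists k : nat, x = g ^+ k.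

Local Notation n := p.-1.

Lemma p_eq : p = (8 * (p %/ 8) + 5)%N.
Proof. have := divn_eq p 8. move: hp8; rewrite (modn_small (_ : 5 < 8)%N) //. lia. Qed.

Lemma n_eq : n = (8 * (p %/ 8) + 4)%N.
Proof. have := p_eq. lia. Qed.

Lemma n_gt0 : (0 < n)%N.
Proof. have := n_eq; lia. Qed.

Lemma cardF : #|'F_p| = p. Proof. exact: card_Fp. Qed.

Lemma gn1 : g ^+ n = 1.
Proof.
have h := expf_card g. rewrite cardF in h.
have hp1 : p = n.+1 by rewrite (prednK (prime_gt0 hp)).
have e : g ^+ p = g * g ^+ n by rewrite -exprS -hp1.
by apply: (mulfI hg0); rewrite -e h mulr1.
Qed.

Lemma gmod k : g ^+ (k %% n) = g ^+ k.
Proof. exact: expr_mod gn1. Qed.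

Lemma nz_image : [set g ^+ x | x : 'I_n in [set: 'I_n]] = [set x : 'F_p | x != 0].
Proof.
  apply/setP => x; rewrite inE; apply/imsetP/idP.
  - by case=> k _ ->; rewrite expf_neq0.
  - move=> hx; have [k ->] := hgen hx. have hn := n_gt0.
    exists (Ordinal (ltn_pmod k hn)) ; first by rewrite inE. by rewrite gmod.
Qed.

Lemma ginj_ord : {in [set: 'I_n] &, injective (fun k : 'I_n => g ^+ k)}.
Proof.
apply/imset_injP. rewrite nz_image.
rewrite cardsT card_ord.
have -> : [set x : 'F_p | x != 0] = [set~ 0] by apply/setP => x; rewrite !inE.
by rewrite cardsC1 cardF.
Qed.

Lemma ginj a b : g ^+ a = g ^+ b -> a = b %[mod n].
Proof.
have hn := n_gt0.
rewrite -gmod -(gmod b) => h.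
have := @ginj_ord (Ordinal (ltn_pmod a hn)) (Ordinal (ltn_pmod b hn)) (in_setT _) (in_setT _) h.
by case.
Qed.

Definition ind (x : 'F_p) : nat :=
  if [pick k : 'I_n | g ^+ k == x] is Some k then val k else 0%N.

Lemma ind_lt x : (ind x < n)%N.
Proof. rewrite /ind; case: pickP => [k _|_]; [exact: ltn_ord | exact: n_gt0]. Qed.

Lemma indP x : x != 0 -> g ^+ ind x = x.
Proof.
move=> hx; have [k ->] := hgen hx. have hn := n_gt0.
rewrite /ind; case: pickP => [k' /eqP //|].
by move=> /(_ (Ordinal (ltn_pmod k hn))) /=; rewrite gmod eqxx.
Qed.

Lemma indX k : ind (g ^+ k) = (k %% n)%N.
Proof.
have h := ginj (indP (expf_neq0 _ hg0)).
by rewrite -h modn_small // ind_lt.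
Qed.

Lemma indM x y : x != 0 -> y != 0 -> ind (x * y) = ((ind x + ind y) %% n)%N.
Proof. by move=> hx hy; rewrite -indX exprD !indP. Qed.

Lemma ind1 : ind 1 = 0%N.
Proof. by rewrite -(expr0 g) indX mod0n. Qed.

Lemma indg : ind g = 1%N.
Proof. by rewrite -[g]expr1 indX modn_small //; have := n_eq; lia. Qed.

Lemma indN1 : ind (-1) = (n %/ 2)%N.
Proof.
have hn := n_eq.
have h2 : (g ^+ (n %/ 2)) ^+ 2 = 1.
  by rewrite -exprM (_ : (n %/ 2 * 2 = n)%N) ?gn1 //; lia.
have : (g ^+ (n %/ 2) == 1) || (g ^+ (n %/ 2) == -1) by rewrite -sqrf_eq1 h2.
case/orP => /eqP h.
  have := ginj (etrans h (esym (expr0 g))). rewrite mod0n modn_small; lia.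
by rewrite -h indX modn_small //; lia.
Qed.

Definition q x := (ind x %% 4)%N.

Lemma four_dvd : (4 %| n)%N.
Proof. rewrite n_eq; apply/dvdnP; exists (2 * (p %/ 8) + 1)%N; lia. Qed.

Lemma qM x y : x != 0 -> y != 0 -> q (x * y) = ((q x + q y) %% 4)%N.
Proof. by move=> hx hy; rewrite /q indM // modn_dvdm ?four_dvd // modnDm. Qed.

Lemma qN1 : q (-1) = 2%N.
Proof. rewrite /q indN1. have := n_eq. lia. Qed.

Lemma qg : q g = 1%N. Proof. by rewrite /q indg. Qed.

Lemma qN x : x != 0 -> q (- x) = ((q x + 2) %% 4)%N.
Proof.
move=> hx. rewrite -mulN1r qM ?oppr_eq0 ?oner_eq0 // qN1; lia.
Qed.

Lemma q_lt x : (q x < 4)%N. Proof. by rewrite /q ltn_pmod. Qed.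


Lemma sum_ind (R : nmodType) (F : nat -> R) :
  \sum_(x : 'F_p | x != 0) F (ind x) = \sum_(k < n) F k.
Proof.
rewrite (eq_bigl (mem [set x : 'F_p | x != 0])); last by move=> x; rewrite !inE.
rewrite -nz_image big_imset /=; last exact: ginj_ord.
apply: eq_big => [i|i _]; first by rewrite inE.
by rewrite indX modn_small.
Qed.

Lemma sum_mod4 (R : nmodType) (F : nat -> R) m :
  \sum_(k < 4 * m) F (k %% 4)%N = (\sum_(r < 4) F r) *+ m.
Proof.
elim: m => [|m IH]; first by rewrite muln0 big_ord0 mulr0n.
rewrite mulnS addnC big_split_ord /= IH mulrS addrC; congr (_ + _).
apply: eq_bigr => i _; congr F.
by rewrite /= mulnC modnMDl modn_small.
Qed.

Fact Dset_key : unit. Proof. exact: tt. Qed.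
Definition Dset := locked_with Dset_key (cyc_class g 4 0 :|: cyc_class g 4 1).
Lemma DsetE : Dset = cyc_class g 4 0 :|: cyc_class g 4 1.
Proof. by rewrite /Dset unlock. Qed.

Lemma cycP e i x : (0 < e)%N -> (e %| n)%N -> (i < e)%N ->
  (x \in cyc_class g e i) = (x != 0) && (ind x %% e == i)%N.
Proof.
move=> he hen hie; rewrite inE; apply/existsP/andP.
- case=> k /eqP ->; split; first exact: expf_neq0.
  by rewrite indX modn_dvdm // mulnC modnMDl modn_small.
- case=> hx /eqP hi.
  have hlt : (ind x %/ e < #|'F_p|)%N.
    rewrite cardF; apply: leq_ltn_trans (leq_div _ _) _.
    apply: ltn_trans (ind_lt x) _; have := n_eq; have := p_eq; lia.
  exists (Ordinal hlt); apply/eqP => /=.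
  by rewrite -{1}(indP hx) {1}(divn_eq (ind x) e) hi mulnC.
Qed.

Lemma DP x : (x \in Dset) = (x != 0) && (q x < 2)%N.
Proof.
rewrite DsetE inE !cycP ?four_dvd // /q.
case: (x != 0) => //=; have := ltn_pmod (ind x) (isT : 0 < 4)%N; lia.
Qed.

Definition Nset a := [set y : 'F_p | (y \in Dset) && (y + a \in Dset)].

Lemma diff_countE a : diff_count Dset a = #|Nset a|.
Proof.
rewrite /diff_count.
have -> : [set xy : 'F_p * 'F_p | [&& xy.1 \in Dset, xy.2 \in Dset & xy.1 - xy.2 == a]]
    = (fun y => (y + a, y)) @: Nset a.
  apply/setP => [[x y]]; rewrite !inE /=; apply/idP/imsetP.
  - case/and3P => hx hy /eqP hxy; exists y; last by rewrite -hxy addrC subrK.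
    by rewrite inE hy -hxy addrC subrK hx.
  - case=> z; rewrite inE => /andP[h1 h2] [-> ->].
    by rewrite h2 h1 /= (addrC z) addrK eqxx.
by rewrite card_imset // => y z [].
Qed.

Lemma N_preim (h : 'F_p -> 'F_p) a b : injective h ->
  (forall y, (y \in Dset) && (y + b \in Dset) = (h y \in Dset) && (h y + a \in Dset)) ->
  #|Nset b| = #|Nset a|.
Proof.
move=> hi H; rewrite -(card_preimset (Nset a) hi).
have -> : Nset b = h @^-1: Nset a by apply/setP => y; rewrite !inE H.
by [].
Qed.

Lemma N_opp a : #|Nset (- a)| = #|Nset a|.
Proof.
apply: (@N_preim (fun y => y - a)); first exact: addIr.
by move=> y; rewrite subrK andbC.
Qed.

Definition cc : 'F_p := - g ^+ 2.

Lemma cc_neq0 : cc != 0. Proof. by rewrite oppr_eq0 expf_neq0. Qed.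

Lemma D_cc w : (cc * w \in Dset) = (w \in Dset).
Proof.
rewrite !DP mulf_eq0 (negbTE cc_neq0) /=.
case: (eqVneq w 0) => [->|hw] //=.
rewrite qM ?cc_neq0 // /cc qN ?expf_neq0 // expr2 qM // qg.
have := q_lt w; case: (q w) => [|[|[|[|]]]] //.
Qed.

Lemma N_cc a : #|Nset (cc * a)| = #|Nset a|.
Proof.
symmetry; apply: (@N_preim (fun y => cc * y)); first exact: (mulfI cc_neq0).
by move=> y; rewrite -mulrDr !D_cc.
Qed.

Lemma N_g2 a : #|Nset (g ^+ 2 * a)| = #|Nset a|.
Proof. by rewrite -(N_cc a) -(N_opp (cc * a)) /cc mulNr opprK. Qed.

Lemma N_g2k k a : #|Nset (g ^+ (2 * k) * a)| = #|Nset a|.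
Proof.
elim: k => [|k IH]; first by rewrite muln0 expr0 mul1r.
by rewrite mulnS exprD -mulrA N_g2.
Qed.

Lemma N_ind x : x != 0 ->
  #|Nset x| = if (ind x %% 2 == 0)%N then #|Nset 1| else #|Nset g|.
Proof.
move=> hx; rewrite -{1}(indP hx) {1}(divn_eq (ind x) 2).
case: ifP => [/eqP ->|/negbT h].
  by rewrite addn0 mulnC -[g ^+ _]mulr1 N_g2k.
have -> : (ind x %% 2 = 1)%N.
  by move: h; have := ltn_pmod (ind x) (isT : 0 < 2)%N; lia.
by rewrite mulnC exprD expr1 N_g2k.
Qed.

Definition mm := (2 * (p %/ 8) + 1)%N.
Lemma n_4m : n = (4 * mm)%N. Proof. rewrite /mm; have := n_eq; lia. Qed.

Lemma sum_nz (F : nat -> nat) :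
  (\sum_(x : 'F_p | x != 0%R) F (q x) = (\sum_(r < 4) F r) * mm)%N.
Proof.
rewrite (sum_ind (fun k => F (k %% 4)%N)) n_4m sum_mod4.
by rewrite -mulr_natr natn.
Qed.

Lemma card_sum (A : {set 'F_p}) : #|A| = (\sum_x (x \in A))%N.
Proof.
rewrite -sum1_card big_mkcond /=; apply: eq_bigr => x _; by case: (x \in A).
Qed.

Lemma sum0 (F : 'F_p -> nat) : (\sum_x F x = F 0%R + \sum_(x | x != 0%R) F x)%N.
Proof. by rewrite (bigD1 0). Qed.

Lemma cardD : #|Dset| = (2 * mm)%N.
Proof.
rewrite card_sum sum0 DP eqxx /=.
rewrite (eq_bigr (fun x => (q x < 2)%N : nat)); last by move=> x hx; rewrite DP hx.
by rewrite (sum_nz (fun r => (r < 2)%N : nat)) !big_ord_recr big_ord0.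
Qed.

Lemma sumN : (\sum_a #|Nset a| = #|Dset| * #|Dset|)%N.
Proof.
rewrite (eq_bigr (fun a : 'F_p => \sum_(y : 'F_p) (((y \in Dset) && (y + a \in Dset)) : nat)));
  last by move=> a _; rewrite card_sum; apply: eq_bigr => y _; rewrite inE.
rewrite exchange_big /= {2}(card_sum Dset) bigop.big_distrr /=; apply: eq_bigr => y _.
rewrite (eq_bigr (fun a : 'F_p => muln (y \in Dset) (y + a \in Dset))); last first.
  by move=> a _; case: (y \in Dset); case: (y + a \in Dset).
rewrite -bigop.big_distrr /= mulnC (card_sum Dset) [in RHS](reindex_inj (addrI y)) /=.
by [].
Qed.

Definition u := #|Nset 1|.
Definition v := #|Nset g|.

Lemma uv_sum : (u + v = 2 * mm - 1)%N.
Proof.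
have h := sumN. rewrite sum0 cardD in h.
have e0 : Nset 0 = Dset by apply/setP => y; rewrite inE addr0 andbb.
rewrite e0 cardD in h.
rewrite (eq_bigr (fun a => (fun r => if (r %% 2 == 0)%N then u else v) (q a))) in h; last first.
  by move=> a ha /=; rewrite N_ind // /q modn_dvdm.
rewrite (sum_nz (fun r => if (r %% 2 == 0)%N then u else v)) !big_ord_recr big_ord0 /= in h.
have hm : (0 < mm)%N by rewrite /mm addn1.
nia.
Qed.

Definition cnd (x : 'F_p) := (x != 0) && (x + 1 != 0).

Definition T (phi : nat -> nat -> int) : int :=
  \sum_(x : 'F_p) (if cnd x then phi (q x) (q (x + 1)) else 0).

Lemma T_sigma phi : T phi = T (fun i j => phi ((j + 2) %% 4) ((i + 2) %% 4))%N.
Proof.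
rewrite /T (reindex_inj (h := fun x : 'F_p => - (x + 1))); last first.
  by move=> x y /oppr_inj /addIr.
apply: eq_bigr => x _ /=.
have e : - (x + 1) + 1 = - x by rewrite opprD subrK.
rewrite /cnd e !oppr_eq0 andbC.
case: ifP => // /andP [h1 h2].
by rewrite !qN.
Qed.

Lemma T_lin a b phi psi :
  T (fun i j => a * phi i j + b * psi i j) = a * T phi + b * T psi.
Proof.
rewrite /T !mulr_sumr -big_split /=; apply: eq_bigr => x _.
by case: ifP; rewrite ?mulr0 ?addr0.
Qed.

Lemma T_zero phi : (forall i j, (i < 4)%N -> (j < 4)%N -> phi i j = 0) -> T phi = 0.
Proof.
move=> H; rewrite /T big1 // => x _; case: ifP => // _; exact: H (q_lt _) (q_lt _).
Qed.

Lemma card_T (A : {set 'F_p}) (phb : nat -> nat -> bool) :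
  (forall y, (y \in A) = cnd y && phb (q y) (q (y + 1))) ->
  (#|A|%:Z = T (fun i j => (phb i j : nat)%:Z)).
Proof.
move=> H; rewrite card_sum /T.
rewrite -natz natr_sum.
apply: eq_bigr => y _; rewrite H natz; by case: (cnd y).
Qed.

Definition dd (i : nat) := (i < 2)%N.
Definition hu (i j : nat) : bool := dd i && dd j.
Definition hv (i j : nat) : bool := dd ((i + 1) %% 4) && dd ((j + 1) %% 4).

Lemma u_T : (u%:Z = T (fun i j => (hu i j : nat)%:Z)).
Proof.
apply: card_T => y; rewrite inE !DP /cnd /hu /dd.
by case: (y != 0); case: (y + 1 != 0); rewrite ?andbF.
Qed.

Lemma v_T : (v%:Z = T (fun i j => (hv i j : nat)%:Z)).
Proof.
rewrite /v -(card_preimset (Nset g) (mulfI hg0)).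
apply: card_T => y.
have e : g * y + g = g * (y + 1) by rewrite mulrDr mulr1.
rewrite !inE e !DP /cnd /hv /dd !mulf_eq0 (negbTE hg0) /=.
case: (eqVneq y 0) => [|hy] //=; case: (eqVneq (y + 1) 0) => [|hy1] //=; rewrite ?andbF //.
by rewrite !qM // qg !(addnC 1%N).
Qed.

Definition re4 (k : nat) : int :=
  match (k %% 4)%N with 0 => 1 | 2 => -1 | _ => 0 end.
Definition im4 (k : nat) : int :=
  match (k %% 4)%N with 1 => 1 | 3 => -1 | _ => 0 end.

Definition RR := T (fun i j => re4 (i + j)).
Definition II := T (fun i j => im4 (i + j)).

Lemma II_uv : II = 2 * (u%:Z - v%:Z).
Proof.
set r := fun i j => 1 * (2 * (hu i j : nat)%:Z + (-2) * (hv i j : nat)%:Z) + (-1) * im4 (i + j).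
have hr : T r = 1 * (2 * u%:Z + (-2) * v%:Z) + (-1) * II.
  by rewrite /r T_lin T_lin -u_T -v_T.
have h0 : T r + T r = 0.
  rewrite {2}T_sigma -[X in X + _]mul1r -[X in _ + X]mul1r -T_lin.
  apply: T_zero => i j hi hj.
  rewrite /r /hu /hv /dd /im4.
  by case: i hi => [|[|[|[|]]]] //; case: j hj => [|[|[|[|]]]].
have : T r = 0 by move: h0; lia.
rewrite hr; lia.
Qed.

Definition psi (x : 'F_p) : algC := if x == 0 then 0 else 'i ^+ ind x.

Lemma i4 : ('i : algC) ^+ 4 = 1.
Proof. by rewrite (exprM _ 2 2) sqrCi expr2 mulN1r opprK. Qed.

Lemma i_n : ('i : algC) ^+ n = 1.
Proof. by rewrite n_4m exprM i4 expr1n. Qed.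

Lemma psiE x : x != 0 -> psi x = 'i ^+ q x.
Proof. by move=> hx; rewrite /psi (negbTE hx) /q (expr_mod _ i4). Qed.

Lemma psi0 : psi 0 = 0. Proof. by rewrite /psi eqxx. Qed.
Lemma psi1 : psi 1 = 1. Proof. by rewrite /psi oner_eq0 ind1 expr0. Qed.

Lemma psiM x y : psi (x * y) = psi x * psi y.
Proof.
case: (eqVneq x 0) => [->|hx]; first by rewrite mul0r psi0 mul0r.
case: (eqVneq y 0) => [->|hy]; first by rewrite mulr0 psi0 mulr0.
rewrite /psi mulf_eq0 (negbTE hx) (negbTE hy) /= indM //.
by rewrite (expr_mod _ i_n) exprD.
Qed.

Lemma psig x : psi (g * x) = 'i * psi x.
Proof. by rewrite psiM /psi (negbTE hg0) indg expr1. Qed.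

Lemma i_neq1 : ('i : algC) != 1.
Proof.
apply/eqP => h; have := @sqrCi algC; rewrite h expr1n => /eqP.
rewrite -subr_eq0 opprK -(natrD _ 1 1) pnatr_eq0 //.
Qed.

Lemma sum_psi : \sum_x psi x = 0.
Proof.
have e : \sum_x psi x = 'i * \sum_x psi x.
  by rewrite mulr_sumr [LHS](reindex_inj (mulfI hg0)); apply: eq_bigr => x _; rewrite psig.
have e2 : (1 - 'i) * \sum_x psi x = 0 by rewrite mulrBl mul1r -e subrr.
move/eqP: e2; rewrite mulf_eq0 subr_eq0 eq_sym (negbTE i_neq1) /=.
by move/eqP.
Qed.

Lemma sum_psi2 : \sum_x psi x ^+ 2 = 0.
Proof.
have e : \sum_x psi x ^+ 2 = - \sum_x psi x ^+ 2.
  rewrite -mulN1r mulr_sumr [LHS](reindex_inj (mulfI hg0)); apply: eq_bigr => x _.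
  by rewrite psig exprMn sqrCi.
apply/eqP; move: e => /eqP; rewrite -subr_eq0 opprK -mulr2n mulrn_eq0 //.
Qed.

Lemma psiV x : psi x^-1 = psi x ^+ 3.
Proof.
case: (eqVneq x 0) => [->|hx]; first by rewrite invr0 psi0 expr0n.
have h1 : psi x * psi x^-1 = 1 by rewrite -psiM divff // psi1.
have h4 : psi x ^+ 4 = 1 by rewrite psiE // -exprM mulnC exprM i4 expr1n.
transitivity (psi x ^+ 3 * (psi x * psi x^-1)); last by rewrite h1 mulr1.
by rewrite mulrA -exprSr h4 mul1r.
Qed.

Lemma iK k : ('i : algC) ^+ k = (re4 k)%:~R + 'i * (im4 k)%:~R.
Proof.
rewrite -(expr_mod k i4) /re4 /im4.
have := ltn_pmod k (isT : 0 < 4)%N.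
case: (k %% 4)%N => [|[|[|[|]]]] //= _.
- by rewrite expr0 mulr0 addr0.
- by rewrite expr1 add0r mulr1.
- by rewrite sqrCi mulr0 addr0.
- by rewrite exprS sqrCi add0r rmorphN1.
Qed.

Lemma iK3 k : (('i : algC) ^+ k) ^+ 3 = (re4 k)%:~R - 'i * (im4 k)%:~R.
Proof.
rewrite -(expr_mod k i4) /re4 /im4 -exprM -(expr_mod _ i4).
have := ltn_pmod k (isT : 0 < 4)%N.
case: (k %% 4)%N => [|[|[|[|]]]] //= _.
- by rewrite expr0 mulr0 subr0.
- rewrite (_ : (1 * 3) %% 4 = 3)%N //.
  by rewrite exprS sqrCi mulrN1 rmorph0 rmorph1 mulr1 sub0r.
- rewrite (_ : (2 * 3) %% 4 = 2)%N //.
  by rewrite sqrCi rmorphN1 rmorph0 mulr0 subr0.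
- rewrite (_ : (3 * 3) %% 4 = 1)%N //.
  by rewrite expr1 rmorph0 rmorphN1 mulrN1 sub0r opprK.
Qed.

Lemma J_eq : \sum_x psi x * psi (x + 1) = (RR%:~R) + 'i * (II%:~R).
Proof.
rewrite /RR /II /T !rmorph_sum mulr_sumr -big_split /=; apply: eq_bigr => x _.
rewrite /cnd; case: (eqVneq x 0) => [->|hx] /=; first by rewrite psi0 mul0r mulr0 addr0.
case: (eqVneq (x + 1) 0) => [->|hx1] /=; first by rewrite psi0 mulr0 mulr0 addr0.
by rewrite !psiE // -exprD iK.
Qed.

Lemma J'_eq : \sum_x psi x^-1 * psi (x + 1)^-1 = (RR%:~R) - 'i * (II%:~R).
Proof.
rewrite /RR /II /T !rmorph_sum mulr_sumr -sumrB /=; apply: eq_bigr => x _.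
rewrite !psiV -exprMn.
rewrite /cnd; case: (eqVneq x 0) => [->|hx] /=; first by rewrite psi0 mul0r expr0n mulr0 subr0.
case: (eqVneq (x + 1) 0) => [->|hx1] /=; first by rewrite psi0 mulr0 expr0n mulr0 subr0.
by rewrite !psiE // -exprD iK3.
Qed.

Lemma RI_p : RR ^+ 2 + II ^+ 2 = p%:Z.
Proof.
have h := jacobi psiM psi0 psi1 sum_psi sum_psi2.
rewrite J_eq J'_eq cardF in h.
have e : (RR%:~R + 'i * II%:~R) * (RR%:~R - 'i * II%:~R) =
    ((RR ^+ 2 + II ^+ 2)%:~R : algC).
  rewrite rmorphD !rmorphXn /=.
  transitivity ((RR%:~R : algC) ^+ 2 - 'i ^+ 2 * (II%:~R) ^+ 2); first ring.
  by rewrite sqrCi mulN1r opprK.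
apply/eqP; rewrite -subr_eq0 -(intr_eq0 algC) rmorphB /= -e h.
by rewrite -pmulrn subrr.
Qed.

Lemma uv_sq (s : nat) : p = (s ^ 2 + 4)%N -> (u%:Z - v%:Z) ^+ 2 = 1.
Proof.
move=> hps.
apply: (@two_sq p RR _ s%:Z hp).
- by rewrite p_eq oddD oddM.
- by rewrite -RI_p II_uv exprMn; congr (_ + _ * _).
- rewrite hps PoszD (_ : (s ^ 2)%N = (s%:Z) ^+ 2 :> int) //.
Qed.

Lemma final (s : nat) : p = (s ^ 2 + 4)%N ->
  let D := cyc_class g 4 0 :|: cyc_class g 4 1 in
  let S_D := [set a : 'F_p | (a != 0) && (diff_count D a == (p - 5) %/ 4)%N] in
  S_D = cyc_class g 2 0 \/ S_D = cyc_class g 2 1.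
Proof.
move=> hps D S_D.
have h1 := uv_sq hps. have h2 := uv_sum.
have hk : ((p - 5) %/ 4 = 2 * (p %/ 8))%N by have := p_eq; lia.
have hd2 : (2 %| n)%N by apply: dvdn_trans four_dvd; [].
have key : forall a : 'F_p, (a \in S_D) = (a != 0) &&
    ((if (ind a %% 2 == 0)%N then u else v) == 2 * (p %/ 8))%N.
  move=> a; rewrite /S_D inE /D -DsetE diff_countE hk.
  by case: (eqVneq a 0) => [//|ha] /=; rewrite N_ind.
have [hu|hv] : (u = 2 * (p %/ 8))%N \/ (v = 2 * (p %/ 8))%N.
  rewrite /mm in h2.
  have : (u%:Z - v%:Z = 1) \/ (u%:Z - v%:Z = -1).
    by move/eqP: h1; rewrite sqrf_eq1 => /orP [/eqP->|/eqP->]; [left|right].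
  lia.
- left; apply/setP => a; rewrite key cycP //.
  case: (a != 0) => //=; case: ifP => /eqP h.
    by rewrite hu eqxx.
  have hv' : (v != 2 * (p %/ 8))%N by rewrite /mm in h2; apply/eqP; lia.
  by rewrite (negbTE hv'); apply/esym/eqP.
- right; apply/setP => a; rewrite key cycP //.
  case: (a != 0) => //=; case: ifP => /eqP h.
    have hu' : (u != 2 * (p %/ 8))%N by rewrite /mm in h2; apply/eqP; lia.
    by rewrite h (negbTE hu').
  rewrite hv eqxx; apply/esym/eqP.
  have := ltn_pmod (ind a) (isT : 0 < 2)%N; lia.
Qed.

End Main.

Theorem lemma4 (p : nat) (hp : prime p) (hp8 : p = 5 %[mod 8])
  (hs : exists s : nat, odd s /\ p = (s ^ 2 + 4)%N)
  (g : 'F_p) (hg : is_generator g) :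
  let D := cyc_class g 4 0 :|: cyc_class g 4 1 in
  let S_D := [set a : 'F_p | (a != 0) && (diff_count D a == (p - 5) %/ 4)%N] in
  S_D = cyc_class g 2 0 \/ S_D = cyc_class g 2 1.
Proof.
case: hg => hg0 hgen; case: hs => s [_ hps].
exact: (final hp hp8 hg0 hgen hps).
Qed.
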